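(* Given an $n$-qubit state $\lvert\psi\rangle$, let $\lvert\phi\rangle$ be a stabilizer state that maximizes the stabilizer fidelity, and let $S^* = \mathrm{Weyl}(\lvert\phi\rangle)$. Let $T \subseteq S^*$ be a subspace of $S^*$. Then \[ \sum_{x \in T} p_\psi(x) \geq \frac{\lvert T\rvert}{2^n} F_\mathcal{S}(\lvert\psi\rangle)^2. \]
   Context: For $x=(a,b)\in\mathbb F_2^{2n}$ the Weyl operator is $W_x = i^{a\cdot b}X^{a_1}Z^{b_1}\otimes\cdots\otimes X^{a_n}Z^{b_n}$; $p_\psi(x)=2^{-n}\langle\psi|W_x|\psi\rangle^2$; $\mathrm{Weyl}(\lvert\phi\rangle)=\{x\in\mathbb F_2^{2n}: W_x\lvert\phi\rangle=\pm\lvert\phi\rangle\}$ (a subspace of $\mathbb F_2^{2n}$); $F_\mathcal{S}(\lvert\psi\rangle)=\max_{\lvert\phi\rangle\text{ stabilizer}}\lvert\langle\phi|\psi\rangle\rvert^2$. *)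

(* Defs.v *)
From HB Require Import structures.
From mathcomp Require Import all_boot all_order all_algebra.
Set Implicit Arguments. Unset Strict Implicit. Unset Printing Implicit Defensive.
Import Order.TTheory GRing.Theory Num.Theory.
Local Open Scope ring_scope.

Section Qubits.
Variable C : numClosedFieldType.
Variable n : nat.

(* Computational basis of n qubits: bit strings k = (k_1,...,k_n), k_q : 'I_2. *)
Definition basis := {ffun 'I_n -> 'I_2}.

Definition qvec := basis -> C.
Definition qop := basis -> basis -> C.

Definition pauliX : 'M[C]_2 := \matrix_(i, j) (if i == j then 0 else 1).
Definition pauliZ : 'M[C]_2 :=
  \matrix_(i, j) (if i == j then (if (i : nat) == 0%N then 1 else -1) else 0).

(* Points of F_2^{2n}: x = (a, b), a = first n coordinates, b = last n. *)
Definition pt := 'rV['F_2]_(n + n).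
Definition pa (x : pt) (q : 'I_n) : nat := x ord0 (lshift n q).
Definition pb (x : pt) (q : 'I_n) : nat := x ord0 (rshift n q).
(* a . b computed in the integers. *)
Definition adotb (x : pt) : nat := (\sum_(q < n) pa x q * pb x q)%N.

(* Weyl operator W_x = i^{a.b} X^{a_1}Z^{b_1} (x) ... (x) X^{a_n}Z^{b_n},
   written out as the Kronecker product of its single-qubit factors. *)
Definition weyl (x : pt) : qop := fun k j =>
  'i ^+ adotb x *
  \prod_(q < n) ((pauliX ^+ pa x q) * (pauliZ ^+ pb x q)) (k q) (j q).

Definition apply_op (A : qop) (v : qvec) : qvec := fun k => \sum_j A k j * v j.
Definition mul_op (A B : qop) : qop := fun k j => \sum_m A k m * B m j.
Definition id_op : qop := fun k j => if k == j then 1 else 0.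

Definition braket (u v : qvec) : C := \sum_k (u k)^* * v k.
Definition expect (u : qvec) (A : qop) (v : qvec) : C := braket u (apply_op A v).

Definition is_state (v : qvec) : Prop := braket v v = 1.

Definition pdist (psi : qvec) (x : pt) : C :=
  (2 ^+ n)^-1 * (expect psi (weyl x) psi) ^+ 2.

Definition weylset (phi : qvec) : {set pt} :=
  [set x | [forall k, apply_op (weyl x) phi k == phi k]
        || [forall k, apply_op (weyl x) phi k == - phi k]].

(* Elements of the Pauli group: (c, x) stands for i^c W_x. *)
Definition pauli_op (g : 'I_4 * pt) : qop :=
  fun k j => 'i ^+ (g.1 : nat) * weyl g.2 k j.

Definition stabilizer_group (S : {set 'I_4 * pt}) : Prop :=
  [/\ #|S| = (2 ^ n)%N,
      (forall g h, g \in S -> h \in S -> exists2 r, r \in S &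
         forall k j, pauli_op r k j = mul_op (pauli_op g) (pauli_op h) k j),
      (forall g h, g \in S -> h \in S -> forall k j,
         mul_op (pauli_op g) (pauli_op h) k j = mul_op (pauli_op h) (pauli_op g) k j) &
      (forall g, g \in S -> ~ (forall k j, pauli_op g k j = - id_op k j))].

Definition stabilizer_state (phi : qvec) : Prop :=
  is_state phi /\
  exists S, stabilizer_group S /\
    forall g, g \in S -> forall k, apply_op (pauli_op g) phi k = phi k.

Definition fidelity (phi psi : qvec) : C := `|braket phi psi| ^+ 2.

Definition maximizes_stab_fidelity (psi phi : qvec) : Prop :=
  stabilizer_state phi /\
  forall phi', stabilizer_state phi' -> fidelity phi' psi <= fidelity phi psi.

Definition F2_subspace (T : {set pt}) : Prop :=
  0 \in T /\ forall x y, x \in T -> y \in T -> x + y \in T.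

End Qubits.

(* Main.v *)
Require Import Defs.
From HB Require Import structures.
From mathcomp Require Import all_boot all_order all_algebra.
From mathcomp Require Import ring.
Import Order.TTheory GRing.Theory Num.Theory.
Local Open Scope ring_scope.

Lemma addxx' (a : 'F_2) : a + a = 0.
Proof. case: a => [[|[|//]] ?]; exact/val_inj. Qed.
Lemma addxx (m : nat) (x : 'rV['F_2]_m) : x + x = 0.
Proof. apply/matrixP => i j; rewrite !mxE; exact: addxx'. Qed.

Section Pauli.
Variable C : numClosedFieldType.

Definition pe (a b u v : nat) : C :=
  if u == ((v + a) %% 2)%N then (if (b * v == 1)%N then -1 else 1) else 0.

Lemma Pent (a b : nat) (u v : 'I_2) : (a < 2)%N -> (b < 2)%N ->
  (pauliX C ^+ a * pauliZ C ^+ b) u v = pe a b u v.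
Proof.
rewrite /pe.
case: a => [|[|//]] _; case: b => [|[|//]] _;
rewrite ?expr0 ?expr1 ?mul1r ?mulr1 /pauliX /pauliZ;
case: u => [[|[|//]] ?]; case: v => [[|[|//]] ?]; rewrite ?mxE //=.
all: rewrite !big_ord_recl big_ord0 !mxE /=; ring.
Qed.

Lemma pe_conj a b u v : (a < 2)%N -> (b < 2)%N -> (u < 2)%N -> (v < 2)%N ->
  (pe a b v u)^* = (-1) ^+ (a * b) * pe a b u v.
Proof.
rewrite /pe.
case: a => [|[|//]] _; case: b => [|[|//]] _;
case: u => [|[|//]] _; case: v => [|[|//]] _ /=;
rewrite ?rmorphN ?conjC1 ?conjC0 ?expr0 ?expr1; ring.
Qed.

Lemma pe_mul a b c d u v : (a < 2)%N -> (b < 2)%N -> (c < 2)%N -> (d < 2)%N ->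
  (u < 2)%N -> (v < 2)%N ->
  \sum_(w < 2) pe a b u w * pe c d w v =
  (-1) ^+ (b * c) * pe ((a + c) %% 2) ((b + d) %% 2) u v.
Proof.
rewrite !big_ord_recl big_ord0 /pe /=.
case: a => [|[|//]] _; case: b => [|[|//]] _;
case: c => [|[|//]] _; case: d => [|[|//]] _;
case: u => [|[|//]] _; case: v => [|[|//]] _ /=;
rewrite ?expr0 ?expr1; ring.
Qed.
End Pauli.

Section Weyl.
Variable C : numClosedFieldType.
Variable n : nat.

Lemma weylE (x : pt n) k j : weyl C x k j =
  'i ^+ adotb x * \prod_q pe C (pa x q) (pb x q) (k q) (j q).
Proof. by rewrite /weyl; congr (_ * _); apply: eq_bigr => q _; rewrite Pent //; exact: ltn_ord. Qed.

Lemma pa_lt2 (x : pt n) q : (pa x q < 2)%N. Proof. exact: ltn_ord. Qed.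
Lemma pb_lt2 (x : pt n) q : (pb x q < 2)%N. Proof. exact: ltn_ord. Qed.
Lemma paD (x y : pt n) q : pa (x + y) q = ((pa x q + pa y q) %% 2)%N.
Proof. by rewrite /pa mxE. Qed.
Lemma pbD (x y : pt n) q : pb (x + y) q = ((pb x q + pb y q) %% 2)%N.
Proof. by rewrite /pb mxE. Qed.

Lemma weyl_herm (x : pt n) k j : weyl C x k j = (weyl C x j k)^*.
Proof.
rewrite !weylE rmorphM /= rmorphXn /= conjCi rmorph_prod /=.
under [in RHS]eq_bigr => q _ do rewrite pe_conj ?pa_lt2 ?pb_lt2 ?ltn_ord //.
rewrite big_split /= prodrXr mulrA -exprMn mulrN1 opprK.
by [].
Qed.

Lemma weyl_mul (x y : pt n) : exists c, forall k j,
  mul_op (weyl C x) (weyl C y) k j = c * weyl C (x + y) k j.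
Proof.
exists ('i ^+ adotb x * 'i ^+ adotb y * (-1) ^+ (\sum_q pb x q * pa y q)
        / 'i ^+ adotb (x + y)) => k j.
rewrite /mul_op.
rewrite (eq_bigr (fun m : basis n => 'i ^+ adotb x * 'i ^+ adotb y *
   \prod_q (pe C (pa x q) (pb x q) (k q) (m q) * pe C (pa y q) (pb y q) (m q) (j q)))); last first.
  by move=> m _; rewrite !weylE mulrACA -big_split.
rewrite -big_distrr /=.
rewrite -(bigA_distr_bigA (fun q (w : 'I_2) => pe C (pa x q) (pb x q) (k q) w *
                                     pe C (pa y q) (pb y q) w (j q))) /=.
under eq_bigr => q _ do rewrite pe_mul ?pa_lt2 ?pb_lt2 ?ltn_ord // -paD -pbD.
rewrite big_split /= prodrXr weylE.
rewrite mulrA -[in RHS]mulrA [in RHS](mulrA _ ('i ^+ _)) divfK ?expf_neq0 ?neq0Ci //.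
by rewrite mulrA.
Qed.
End Weyl.

Section Abstract.
Variable C : numClosedFieldType.
Variable n : nat.
Local Notation qvec := (qvec C n).
Local Notation qop := (qop C n).

Definition herm (A : qop) := forall k j, A k j = (A j k)^*.

Lemma braket_conj (u v : qvec) : (braket u v)^* = braket v u.
Proof. rewrite /braket rmorph_sum; apply: eq_bigr => k _; by rewrite rmorphM /= conjCK mulrC. Qed.

Lemma braket_ext (u v w : qvec) : (forall k, v k = w k) -> braket u v = braket u w.
Proof. by move=> h; apply: eq_bigr => k _; rewrite h. Qed.

Lemma braket_extl (u v w : qvec) : (forall k, v k = w k) -> braket v u = braket w u.
Proof. by move=> h; apply: eq_bigr => k _; rewrite h. Qed.

Lemma braket_scaler (u v : qvec) c : braket u (fun k => c * v k) = c * braket u v.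
Proof. rewrite /braket big_distrr; apply: eq_bigr => k _ /=; ring. Qed.

Lemma braket_scalel (u v : qvec) c : braket (fun k => c * u k) v = c^* * braket u v.
Proof. rewrite /braket big_distrr; apply: eq_bigr => k _ /=; rewrite rmorphM; ring. Qed.

Lemma braket_herm (A : qop) (u v : qvec) : herm A ->
  braket (apply_op A u) v = braket u (apply_op A v).
Proof.
move=> hA; rewrite /braket /apply_op.
under eq_bigr => k _ do rewrite rmorph_sum big_distrl.
rewrite exchange_big /=; apply: eq_bigr => j _.
rewrite big_distrr; apply: eq_bigr => k _ /=.
rewrite rmorphM /= -hA; ring.
Qed.

Lemma braket_ge0 (v : qvec) : 0 <= braket v v.
Proof.
rewrite /braket; apply: sumr_ge0 => k _.
by rewrite mulrC -normCK exprn_ge0.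
Qed.

Lemma apply_mul (A B : qop) (v : qvec) k :
  apply_op (mul_op A B) v k = apply_op A (apply_op B v) k.
Proof.
rewrite /apply_op /mul_op.
under eq_bigr => j _ do rewrite big_distrl.
rewrite exchange_big /=; apply: eq_bigr => m _.
rewrite big_distrr; apply: eq_bigr => j _ /=; ring.
Qed.

Lemma cauchy (phi v : qvec) : is_state phi ->
  `|braket phi v| ^+ 2 <= braket v v.
Proof.
move=> hphi.
have hw : forall b : C, braket (fun k => v k - b * phi k) (fun k => v k - b * phi k)
   = braket v v - b * braket v phi - b^* * braket phi v + b^* * b * braket phi phi.
  move=> b; rewrite /braket !mulr_sumr -!sumrN -!big_split /=.
  apply: eq_bigr => k _; rewrite rmorphB rmorphM /=; ring.
set b := braket phi v.
pose w : qvec := fun k => v k - b * phi k.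
have := braket_ge0 w.
rewrite /w hw hphi -/b -[braket v phi]braket_conj -/b normCK mulr1.
have -> : braket v v - b * b^* - b^* * b + b^* * b = braket v v - b * b^* by ring.
by rewrite subr_ge0.
Qed.

Lemma apply_extA (A B : qop) (v : qvec) k : (forall k j, A k j = B k j) ->
  apply_op A v k = apply_op B v k.
Proof. by move=> h; apply: eq_bigr => j _; rewrite h. Qed.

Lemma apply_extv (A : qop) (v w : qvec) k : (forall j, v j = w j) ->
  apply_op A v k = apply_op A w k.
Proof. by move=> h; apply: eq_bigr => j _; rewrite h. Qed.

Lemma apply_scaleA (A : qop) (v : qvec) c k :
  apply_op (fun k j => c * A k j) v k = c * apply_op A v k.
Proof. rewrite /apply_op big_distrr; apply: eq_bigr => j _ /=; ring. Qed.

Lemma apply_scalev (A : qop) (v : qvec) c k :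
  apply_op A (fun j => c * v j) k = c * apply_op A v k.
Proof. rewrite /apply_op big_distrr; apply: eq_bigr => j _ /=; ring. Qed.

Lemma reindexT (T : {set pt n}) (G : pt n -> C) x :
  (forall x y, x \in T -> y \in T -> x + y \in T) -> x \in T ->
  \sum_(y in T) G (x + y) = \sum_(z in T) G z.
Proof.
move=> TD hx.
rewrite [RHS](reindex (fun y => x + y)) /=; last first.
  by exists (fun y => x + y) => z _; rewrite addrA addxx add0r.
apply: eq_bigl => y; apply/idP/idP => h; first exact: TD.
have -> : y = x + (x + y) by rewrite addrA addxx add0r.
exact: TD.
Qed.

Lemma main_ineq (T : {set pt n}) (W : pt n -> qop) (s : pt n -> C) (phi psi : qvec) :
  0 \in T -> (forall x y, x \in T -> y \in T -> x + y \in T) ->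
  (forall x, herm (W x)) ->
  (forall x y, exists c, forall k j, mul_op (W x) (W y) k j = c * W (x + y) k j) ->
  (forall x, x \in T -> s x = 1 \/ s x = -1) ->
  is_state phi ->
  (forall x, x \in T -> forall k, apply_op (W x) phi k = s x * phi k) ->
  #|T|%:R * (`|braket phi psi| ^+ 2) ^+ 2 <=
  \sum_(x in T) (braket psi (apply_op (W x) psi)) ^+ 2.
Proof.
move=> T0 TD hW hM hs hphi hWphi.
set N : C := #|T|%:R.
have Ngt0 : 0 < N by rewrite ltr0n; apply/card_gt0P; exists 0.
have N0 : N != 0 by rewrite gt_eqF.
have hN0 : 0 <= N := ltW Ngt0.
have s2 : forall x, x \in T -> s x * s x = 1.
  by move=> x /hs [] ->; rewrite ?mulr1 ?mulrNN ?mulr1.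
have sreal : forall x, x \in T -> s x \is Num.real.
  by move=> x /hs [] ->; rewrite ?rpred1 ?rpredN ?rpred1.
have sconj : forall x, x \in T -> (s x)^* = s x.
  by move=> x /sreal; rewrite CrealE => /eqP.
pose Q : qop := fun k j => \sum_(x in T) s x * W x k j.
have applyQ : forall v k, apply_op Q v k = \sum_(x in T) s x * apply_op (W x) v k.
  move=> v k; rewrite /apply_op /Q.
  under eq_bigr => j _ do rewrite big_distrl.
  rewrite exchange_big /=; apply: eq_bigr => x _.
  rewrite big_distrr; apply: eq_bigr => j _ /=; ring.
have hQ : herm Q.
  move=> k j; rewrite /Q rmorph_sum; apply: eq_bigr => x hx.
  by rewrite rmorphM /= sconj // -hW.
have hQphi : forall k, apply_op Q phi k = N * phi k.
  move=> k; rewrite applyQ.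
  rewrite (eq_bigr (fun _ => phi k)); last first.
    by move=> x hx; rewrite hWphi // mulrA s2 // mul1r.
  by rewrite sumr_const -mulr_natl.
have [k0 hk0] : exists k0, phi k0 != 0.
  case: (pickP (fun k => phi k != 0)) => [k hk|h]; first by exists k.
  move: hphi; rewrite /is_state /braket big1 => [/esym/eqP|k _]; first by rewrite oner_eq0.
  by move/negbFE/eqP: (h k) => ->; rewrite mulr0.
have hMs : forall x y, x \in T -> y \in T -> forall k j,
    s x * s y * mul_op (W x) (W y) k j = s (x + y) * W (x + y) k j.
  move=> x y hx hy k j.
  have [c hc] := hM x y.
  have E : s y * s x * phi k0 = c * s (x + y) * phi k0.
    have h1 : apply_op (mul_op (W x) (W y)) phi k0 = c * s (x + y) * phi k0.
      rewrite (@apply_extA _ (fun k j => c * W (x + y) k j)) //.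
      by rewrite apply_scaleA hWphi ?TD // mulrA.
    have h2 : apply_op (W x) (apply_op (W y) phi) k0 = s y * s x * phi k0.
      rewrite (@apply_extv _ _ (fun j => s y * phi j)); last by move=> i; exact: hWphi.
      by rewrite apply_scalev hWphi // mulrA.
    by rewrite -h1 -h2 apply_mul.
  have E' := mulIf hk0 E.
  have hcv : c = s y * s x * s (x + y).
    by rewrite E' -mulrA s2 ?TD // mulr1.
  rewrite hc hcv.
  have -> : s x * s y * (s y * s x * s (x + y) * W (x + y) k j) =
     (s x * s x) * (s y * s y) * s (x + y) * W (x + y) k j by ring.
  by rewrite !s2 // !mul1r.
have hQQ : forall k j, mul_op Q Q k j = N * Q k j.
  move=> k j; rewrite /mul_op.
  rewrite (eq_bigr (fun m => \sum_(x in T) \sum_(y in T) s x * s y * (W x k m * W y m j))); last first.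
    move=> m _; rewrite /Q big_distrl; apply: eq_bigr => x _ /=.
    rewrite big_distrr; apply: eq_bigr => y _ /=; ring.
  rewrite exchange_big /=.
  rewrite (eq_bigr (fun x => \sum_(z in T) s z * W z k j)); last first.
    move=> x hx; rewrite exchange_big /=.
    rewrite (eq_bigr (fun y => s (x + y) * W (x + y) k j)); last first.
      by move=> y hy; rewrite -hMs // /mul_op big_distrr.
    exact: (@reindexT T (fun z => s z * W z k j) x TD hx).
  by rewrite sumr_const -mulr_natl.
pose e x := braket psi (apply_op (W x) psi).
pose v : qvec := apply_op Q psi.
pose R := braket psi v.
have hR1 : R = \sum_(x in T) s x * e x.
  rewrite /R /v (@braket_ext psi _ (fun k => \sum_(x in T) s x * apply_op (W x) psi k)); last exact: applyQ.
  rewrite /braket; under eq_bigr => k _ do rewrite big_distrr.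
  rewrite exchange_big /=; apply: eq_bigr => x _; rewrite /e /braket big_distrr.
  apply: eq_bigr => k _ /=; ring.
have hR2 : N * R = braket v v.
  rewrite {2}/v braket_herm // (@braket_ext psi _ (fun k => N * apply_op Q psi k)).
    by rewrite braket_scaler.
  move=> k; rewrite -apply_mul (@apply_extA _ (fun k j => N * Q k j)) ?apply_scaleA //.
have hbeta : braket phi v = N * braket phi psi.
  rewrite /v -braket_herm // (@braket_extl psi _ (fun k => N * phi k)) //.
  by rewrite braket_scalel conjC_nat.
set a := `|braket phi psi| ^+ 2.
have a0 : 0 <= a by rewrite exprn_ge0.
have hcs : N * a <= R.
  have := @cauchy phi v hphi.
  rewrite hbeta -hR2 normrM normr_nat exprMn -/a expr2 -mulrA ler_pM2l //.
have ereal : forall x, e x \is Num.real.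
  by move=> x; rewrite CrealE; apply/eqP; rewrite braket_conj braket_herm.
have R0 : 0 <= R.
  have -> : R = N^-1 * braket v v by rewrite -hR2 mulKf.
  by rewrite mulr_ge0 ?invr_ge0 ?braket_ge0.
set m := R / N.
have mreal : m \is Num.real.
  by rewrite rpredM ?ger0_real ?invr_ge0.
have hsum : \sum_(x in T) (e x - s x * m) ^+ 2 = \sum_(x in T) e x ^+ 2 - R ^+ 2 / N.
  rewrite (eq_bigr (fun x => e x ^+2 - (2 * m) * (s x * e x) + m ^+ 2)); last first.
    move=> x hx; have -> : (e x - s x * m)^+2 = e x ^+2 - 2 * m * (s x * e x) + (s x * s x) * m ^+ 2 by ring.
    by rewrite s2 // mul1r.
  rewrite big_split /= sumrB -mulr_sumr -hR1 sumr_const /m -mulr_natl -/N.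
  by field.
have hpos : 0 <= \sum_(x in T) (e x - s x * m) ^+ 2.
  apply: sumr_ge0 => x hx.
  rewrite -real_normK ?exprn_ge0 //.
  apply: rpredB; first exact: ereal.
  by apply: rpredM => //; exact: sreal.
have step1 : R ^+ 2 / N <= \sum_(x in T) e x ^+ 2.
  by rewrite -subr_ge0 -hsum.
apply: le_trans step1.
have -> : N * a ^+ 2 = (N * a) ^+ 2 / N by field.
rewrite ler_wpM2r ?invr_ge0 // !expr2.
by rewrite ler_pM ?mulr_ge0.
Qed.

End Abstract.

Theorem corollary5p3 (C : numClosedFieldType) (n : nat) (psi phi : qvec C n)
    (T : {set pt n}) :
  is_state psi ->
  maximizes_stab_fidelity psi phi ->
  F2_subspace T ->
  T \subset weylset phi ->
  \sum_(x in T) pdist psi x >=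
    #|T|%:R / (2 ^+ n) * (fidelity phi psi) ^+ 2.
Proof.
move=> _ [[hphi _] _] [T0 TD] hsub.
pose s x : C := if [forall k, apply_op (weyl C x) phi k == phi k] then 1 else -1.
have hWphi : forall x, x \in T -> forall k, apply_op (weyl C x) phi k = s x * phi k.
  move=> x hx k; move/subsetP: hsub => /(_ x hx); rewrite inE /s.
  case: ifP => [/forallP h _|_ /= /forallP h]; first by rewrite mul1r; apply/eqP.
  by rewrite mulN1r; apply/eqP.
have hs : forall x, x \in T -> s x = 1 \/ s x = -1.
  by move=> x _; rewrite /s; case: ifP; [left|right].
have := @main_ineq C n T (@weyl C n) s phi psi T0 TD
  (fun x k j => @weyl_herm C n x k j) (@weyl_mul C n) hs hphi hWphi.
move=> H.
rewrite /pdist -mulr_sumr /fidelity /expect.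
rewrite mulrAC mulrC ler_wpM2l ?invr_ge0 ?exprn_ge0 ?ler0n //.
Qed.
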